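(* Let $\mathcal{X}\subset\mathbb{R}^d$ be compact, $k$ a kernel with $k(x,y)\le1$ for all $x,y$, $\sigma>0$, and $f\in\mathcal{H}_k$. Run Algorithm 3 with observations $y_t=f(x_t)$ (i.e. $h=f$, $g=0$): $x_t\in\arg\max_{x\in\mathcal{X}}\widehat m_{t-1}(x)+\|f\|_{\mathcal{H}_k}\widehat\sigma_{t-1}(x)$, assuming maximizers exist and the points $x_1,\dots,x_T$ are pairwise distinct. Let $C_1=\frac{8}{\log(1+\sigma^{-2})}$. Then $$R_T\le\|f\|_{\mathcal{H}_k}\sqrt{TC_1\gamma_T}+2T\|f\|_{\mathcal{H}_k}\sigma,\qquad r_T\le\|f\|_{\mathcal{H}_k}\sqrt{\frac{C_1\gamma_T}{T}}+2\|f\|_{\mathcal{H}_k}\sigma.$$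
   Context: $\mathbf{k}_t(x)=[k(x,x_i)]_{i\le t}$, $\mathbf{K}_t=[k(x_i,x_j)]_{i,j\le t}$, $\mathbf{y}_t=[y_i]_{i\le t}$, $\widehat m_t(x)=\mathbf{k}_t(x)^T(\mathbf{K}_t+\sigma^2I)^{-1}\mathbf{y}_t$, $\widehat\sigma_t^2(x)=k(x,x)-\mathbf{k}_t(x)^T(\mathbf{K}_t+\sigma^2I)^{-1}\mathbf{k}_t(x)$, $\widehat m_0\equiv0$, $\widehat\sigma_0^2(x)=k(x,x)$. $x^*\in\arg\max_{\mathcal{X}}f$; $R_T=\sum_{t=1}^T(f(x^* )-f(x_t))$; $r_T=f(x^* )-\max_{t\le T}f(x_t)$; $\gamma_T=\max_{x_1,\dots,x_T\in\mathcal{X}}\frac12\log\det(\mathbf{I}_T+\sigma^{-2}\mathbf{K}_T)$. *)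

(* Defs.v *)
From HB Require Import structures.
From Stdlib Require Import Reals ClassicalDescription IndefiniteDescription FunctionalExtensionality.
From mathcomp Require Import all_boot all_algebra.
Set Implicit Arguments. Unset Strict Implicit. Unset Printing Implicit Defensive.

Definition Req_bool (x y : R) : bool := if Req_EM_T x y then true else false.
Lemma Req_boolP : Equality.axiom Req_bool.
Proof. move=> x y; rewrite /Req_bool; case: Req_EM_T => h; [exact: ReflectT | exact: ReflectF]. Qed.
HB.instance Definition _ := hasDecEq.Build R Req_boolP.

Definition R_find (P : pred R) (n : nat) : option R :=
  match excluded_middle_informative (exists x, P x) with
  | left h => Some (proj1_sig (constructive_indefinite_description _ h))
  | right _ => None end.
Lemma R_find_correct P n x : R_find P n = Some x -> P x.
Proof. rewrite /R_find; case: excluded_middle_informative => // h [<-].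
by case: constructive_indefinite_description. Qed.
Lemma R_find_complete (P : pred R) : (exists x, P x) -> exists n, R_find P n.
Proof. move=> h; exists 0%N; rewrite /R_find; case: excluded_middle_informative => //. Qed.
Lemma R_find_ext (P Q : pred R) : P =1 Q -> R_find P =1 R_find Q.
Proof. move=> /functional_extensionality -> //. Qed.
HB.instance Definition _ := hasChoice.Build R R_find_correct R_find_complete R_find_ext.

Lemma R_addA : associative Rplus. Proof. move=> *; ring. Qed.
Lemma R_addC : commutative Rplus. Proof. move=> *; ring. Qed.
Lemma R_add0 : left_id R0 Rplus. Proof. move=> *; ring. Qed.
Lemma R_addN : left_inverse R0 Ropp Rplus. Proof. move=> *; ring. Qed.
HB.instance Definition _ := GRing.isZmodule.Build R R_addA R_addC R_add0 R_addN.
Lemma R_mulA : associative Rmult. Proof. move=> *; ring. Qed.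
Lemma R_mulC : commutative Rmult. Proof. move=> *; ring. Qed.
Lemma R_mul1 : left_id R1 Rmult. Proof. move=> *; ring. Qed.
Lemma R_mulDl : left_distributive Rmult Rplus. Proof. move=> *; ring. Qed.
Lemma R_one_neq0 : (R1 : R) != R0.
Proof. apply/eqP; exact R1_neq_R0. Qed.
HB.instance Definition _ := GRing.Zmodule_isComNzRing.Build R R_mulA R_mulC R_mul1 R_mulDl R_one_neq0.
Lemma R_mulVf (x : R) : x != R0 -> Rmult (Rinv x) x = R1.
Proof. move/eqP=> h; exact: Rinv_l. Qed.
Lemma R_inv0 : Rinv R0 = R0. Proof. exact: Rinv_0. Qed.
HB.instance Definition _ := GRing.ComNzRing_isField.Build R R_mulVf R_inv0.

Local Open Scope ring_scope.

Definition pt (d : nat) := 'rV[R]_d.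

(* Compact subset of R^d: bounded and (sequentially) closed (Heine-Borel). *)
Definition compact_set (d : nat) (X : pt d -> Prop) : Prop :=
  (exists M : R, forall x, X x -> forall i : 'I_d, Rle (Rabs (x ord0 i)) M) /\
  (forall (u : nat -> pt d) (l : pt d),
      (forall n, X (u n)) ->
      (forall i : 'I_d, Un_cv (fun n => u n ord0 i) (l ord0 i)) -> X l).

Definition hnorm (H : Type) (inner : H -> H -> R) (f : H) : R := sqrt (inner f f).

Record IsRKHS (d : nat) (X : pt d -> Prop) (k : pt d -> pt d -> R)
    (H : Type) (hadd : H -> H -> H) (hscal : R -> H -> H)
    (inner : H -> H -> R) (ev : H -> pt d -> R) (kfeat : pt d -> H) : Prop := {
  rkhs_ev_add : forall f g x, ev (hadd f g) x = Rplus (ev f x) (ev g x);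
  rkhs_ev_scal : forall a f x, ev (hscal a f) x = Rmult a (ev f x);
  rkhs_ev_ext : forall f g, (forall x, X x -> ev f x = ev g x) -> f = g;
  rkhs_inner_sym : forall f g, inner f g = inner g f;
  rkhs_inner_add : forall f g h, inner (hadd f g) h = Rplus (inner f h) (inner g h);
  rkhs_inner_scal : forall a f g, inner (hscal a f) g = Rmult a (inner f g);
  rkhs_inner_pos : forall f, Rle R0 (inner f f);
  rkhs_inner_def : forall f, inner f f = R0 -> forall x, X x -> ev f x = R0;
  rkhs_kfeat : forall x y, X x -> X y -> ev (kfeat y) x = k x y;
  rkhs_reproducing : forall f x, X x -> inner f (kfeat x) = ev f x;
  rkhs_complete : forall u : nat -> H,
    (forall eps, Rlt R0 eps -> exists N, forall m n, (N <= m)%N -> (N <= n)%N ->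
        Rlt (hnorm inner (hadd (u m) (hscal (Ropp R1) (u n)))) eps) ->
    exists l : H, forall eps, Rlt R0 eps -> exists N, forall n, (N <= n)%N ->
        Rlt (hnorm inner (hadd (u n) (hscal (Ropp R1) l))) eps
}.

(* Data: query points xs 1, ..., xs t (xs 0 is unused). *)
Definition Kmat (d : nat) (k : pt d -> pt d -> R) (xs : nat -> pt d) (t : nat)
  : 'M[R]_t := \matrix_(i < t, j < t) k (xs i.+1) (xs j.+1).
Definition kvec (d : nat) (k : pt d -> pt d -> R) (xs : nat -> pt d) (t : nat)
  (x : pt d) : 'cV[R]_t := \col_(i < t) k x (xs i.+1).
Definition yvec (d : nat) (y : pt d -> R) (xs : nat -> pt d) (t : nat)
  : 'cV[R]_t := \col_(i < t) y (xs i.+1).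

Definition post_mean (d : nat) (k : pt d -> pt d -> R) (sigma : R)
  (f : pt d -> R) (xs : nat -> pt d) (t : nat) (x : pt d) : R :=
  ((kvec k xs t x)^T *m invmx (Kmat k xs t + (sigma ^+ 2)%:M) *m yvec f xs t)
    ord0 ord0.

Definition post_var (d : nat) (k : pt d -> pt d -> R) (sigma : R)
  (xs : nat -> pt d) (t : nat) (x : pt d) : R :=
  k x x - ((kvec k xs t x)^T *m invmx (Kmat k xs t + (sigma ^+ 2)%:M)
            *m kvec k xs t x) ord0 ord0.

Definition info_gain (d : nat) (k : pt d -> pt d -> R) (sigma : R)
  (xs : nat -> pt d) (T : nat) : R :=
  Rmult (Rinv 2) (ln (\det (1%:M + sigma ^- 2 *: Kmat k xs T))).

Definition cum_regret (d : nat) (f : pt d -> R) (xstar : pt d)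
  (xs : nat -> pt d) (T : nat) : R :=
  \sum_(1 <= t < T.+1) (f xstar - f (xs t)).

(* Simple regret r_T = f(xstar) - max_{1<=t<=T} f(x_t)  (meaningful for T >= 1). *)
Definition simple_regret (d : nat) (f : pt d -> R) (xstar : pt d)
  (xs : nat -> pt d) (T : nat) : R :=
  f xstar - \big[Rmax / f (xs 1%N)]_(1 <= t < T.+1) f (xs t).

Definition C1_const (sigma : R) : R := Rdiv 8 (ln (Rplus 1 (Rinv (Rmult sigma sigma)))).

(* Main.v *)
Require Import Defs.
From Stdlib Require Import Reals.
From HB Require Import structures.
From Stdlib Require Import Lra Lia.
From mathcomp Require all_boot all_algebra.

Module CorHelpers.
Import all_boot all_algebra.
Import GRing.Theory.
Local Set Implicit Arguments. Local Unset Strict Implicit. Local Unset Printing Implicit Defensive.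
Ltac toR := rewrite ?GRing.expr2 ?GRing.mulr2n; cbn -[Rplus Rmult Ropp Rinv sqrt ln exp Rabs IZR INR]; try (match goal with |- @eq _ ?a ?b => change (@eq R a b) end).
Local Open Scope R_scope.


Lemma exp_tangent m y : exp m * (1 + (y - m)) <= exp y.
Proof.
have e := exp_pos m. have h := exp_ineq1_le (y - m).
have -> : exp y = exp m * exp (y - m) by rewrite -exp_plus; f_equal; ring.
apply: Rmult_le_compat_l; lra.
Qed.

Lemma ln_concave a v : 0 < a -> 0 <= v <= 1 -> v * ln (1 + a) <= ln (1 + a * v).
Proof.
move=> a0 hv.
set L := ln (1 + a).
have eL : exp L = 1 + a by rewrite /L exp_ln //; lra.
have h1 := exp_tangent (v * L) L.
have h2 := exp_tangent (v * L) 0.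
rewrite exp_0 in h2.
have : exp (v * L) <= 1 + a * v.
  have e := exp_pos (v * L).
  have : v * (exp (v * L) * (1 + (L - v * L))) + (1 - v) * (exp (v * L) * (1 + (0 - v * L))) = exp (v * L) by ring.
  rewrite eL in h1.
  nra.
move=> h.
rewrite -{1}(ln_exp (v * L)).
case: (Rle_lt_or_eq_dec _ _ h) => [hl|->]; last by right.
left; apply: ln_increasing => //; exact: exp_pos.
Qed.

Lemma ln_ge0 x : 1 <= x -> 0 <= ln x.
Proof.
move=> h; rewrite -ln_1; case: (Rle_lt_or_eq_dec _ _ h) => [hl|<-]; last by right.
left; apply: ln_increasing => //; lra.
Qed.

Lemma sumS n (F : nat -> R) : (\sum_(0 <= i < n.+1) F i)%R = (\sum_(0 <= i < n) F i)%R + F n.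
Proof. by rewrite big_nat_recr. Qed.

Lemma sum0 (F : nat -> R) : (\sum_(0 <= i < 0) F i)%R = 0.
Proof. by rewrite big_geq. Qed.

Lemma sum_le n (F G : nat -> R) : (forall i, (i < n)%N -> F i <= G i) ->
  (\sum_(0 <= i < n) F i)%R <= (\sum_(0 <= i < n) G i)%R.
Proof.
elim: n => [|n IH] h; first by rewrite !sum0; right.
rewrite !sumS; apply: Rplus_le_compat; [apply: IH => i hi; apply: h; exact: ltnW|exact: h].
Qed.

Lemma sum_const n (c : R) : (\sum_(0 <= i < n) c)%R = INR n * c.
Proof. elim: n => [|n IH]; first by rewrite sum0 /=; toR; ring. by rewrite sumS IH S_INR; toR; ring. Qed.

Lemma sum_ge0 n (F : nat -> R) : (forall i, (i < n)%N -> 0 <= F i) -> 0 <= (\sum_(0 <= i < n) F i)%R.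
Proof. move=> h; rewrite -(Rmult_0_r (INR n)) -sum_const; exact: sum_le. Qed.

Lemma sum_add n (F G : nat -> R) : (\sum_(0 <= i < n) (F i + G i))%R = (\sum_(0 <= i < n) F i)%R + (\sum_(0 <= i < n) G i)%R.
Proof. elim: n => [|n IH]; first by rewrite !sum0; toR; ring. by rewrite !sumS IH; toR; ring. Qed.

Lemma sum_scal n c (F : nat -> R) : (\sum_(0 <= i < n) (c * F i))%R = c * (\sum_(0 <= i < n) F i)%R.
Proof. elim: n => [|n IH]; first by rewrite !sum0; toR; ring. by rewrite !sumS IH; toR; ring. Qed.

Lemma sum_cs n (F : nat -> R) :
  (\sum_(0 <= i < n) F i)%R * (\sum_(0 <= i < n) F i)%R <= INR n * (\sum_(0 <= i < n) (F i * F i))%R.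
Proof.
case: n => [|n].
  rewrite !sum0 /=; lra.
set S := (\sum_(0 <= i < n.+1) F i)%R; set Q := (\sum_(0 <= i < n.+1) (F i * F i))%R.
set N := INR n.+1.
have Np : 0 < N by rewrite /N S_INR; have := pos_INR n; lra.
set l := S / N.
have e : (\sum_(0 <= i < n.+1) ((F i - l) * (F i - l)))%R = Q - 2 * l * S + N * (l * l).
  have -> : (\sum_(0 <= i < n.+1) ((F i - l) * (F i - l)))%R =
            (\sum_(0 <= i < n.+1) ((F i * F i) + ((-2 * l) * F i + l * l)))%R.
    apply: eq_bigr => i _; toR; toR; ring.
  rewrite sum_add sum_add sum_scal sum_const -/S -/Q -/N; toR; ring.
have : 0 <= (\sum_(0 <= i < n.+1) ((F i - l) * (F i - l)))%R.
  apply: sum_ge0 => i _; exact: Rle_0_sqr.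
rewrite e /l => h.
have : 0 <= N * (Q - 2 * (S / N) * S + N * (S / N * (S / N))) by apply: Rmult_le_pos; lra.
have -> : N * (Q - 2 * (S / N) * S + N * (S / N * (S / N))) = N * Q - S * S by field; lra.
lra.
Qed.

Lemma sum_ln n (F : nat -> R) : (forall i, (i < n)%N -> 0 < F i) ->
  ln (\prod_(0 <= i < n) F i)%R = (\sum_(0 <= i < n) ln (F i))%R.
Proof.
elim: n => [|n IH] h.
  by rewrite sum0 big_geq // ln_1.
have pos : forall m, (m <= n.+1)%N -> 0 < (\prod_(0 <= i < m) F i)%R.
  elim=> [|m IHm] hm; first by rewrite big_geq //; toR; lra.
  rewrite big_nat_recr //; apply: Rmult_lt_0_compat; [apply: IHm; exact: ltnW|exact: h].
rewrite big_nat_recr // sumS ln_mult; first by rewrite IH // => i hi; apply: h; exact: ltnW.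
  exact: pos.
exact: h.
Qed.


Lemma bigmax_ge (F : nat -> R) a : forall k m i, (m <= i < m + k)%N ->
  F i <= \big[Rmax/a]_(m <= j < m + k) F j.
Proof.
elim=> [|k IH] m i; first by rewrite addn0 => /andP [h1 h2]; move: (leq_ltn_trans h1 h2); rewrite ltnn.
move=> /andP [h1 h2]; rewrite big_ltn ?addnS ?ltnS ?leq_addr //.
case: (ltngtP m i) h1 => // [lt _|<- _]; last exact: Rmax_l.
apply: Rle_trans (Rmax_r _ _); rewrite -addSn; apply: IH; by rewrite lt /= addSn -addnS h2.
Qed.

Lemma final_arith (B Rg S V T g L s : R) : 0 <= B -> 0 < T -> 0 < L -> 0 < s -> 0 <= S ->
  Rg <= 2 * B * S -> S * S <= T * V -> V <= 2 * g / L ->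
  Rg <= B * sqrt (T * (8 / L) * g) + 2 * T * B * s.
Proof.
move=> B0 T0 L0 s0 S0 h1 h2 h3.
have e1 : S <= sqrt (T * V).
  have : sqrt (S * S) <= sqrt (T * V) by apply: sqrt_le_1_alt.
  by rewrite sqrt_square.
have e2 : sqrt (T * V) <= sqrt (T * (2 * g / L)).
  apply: sqrt_le_1_alt; apply: Rmult_le_compat_l; lra.
have e3 : 2 * sqrt (T * (2 * g / L)) = sqrt (T * (8 / L) * g).
  have -> : T * (8 / L) * g = (2 * 2) * (T * (2 * g / L)) by field; lra.
  rewrite [RHS]sqrt_mult_alt; last lra.
  by rewrite sqrt_square //; lra.
have : 0 <= 2 * T * B * s by apply: Rmult_le_pos; [apply: Rmult_le_pos|]; lra.
have : B * S <= B * sqrt (T * (2 * g / L)) by apply: Rmult_le_compat_l => //; lra.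
nra.
Qed.

Lemma final_simple (B r Rg T C g s : R) : 0 < T -> T * r <= Rg ->
  Rg <= B * sqrt (T * C * g) + 2 * T * B * s ->
  r <= B * sqrt (C * g / T) + 2 * B * s.
Proof.
move=> T0 h1 h2.
have e : sqrt (T * C * g) = T * sqrt (C * g / T).
  have -> : T * C * g = (T * T) * (C * g / T) by field; lra.
  rewrite sqrt_mult_alt; last nra.
  by rewrite sqrt_square //; lra.
rewrite e in h2.
have : T * r <= T * (B * sqrt (C * g / T) + 2 * B * s) by lra.
move=> h; apply: (Rmult_le_reg_l T) => //.
Qed.


Lemma quad_cs (a b c : R) : 0 <= c -> (forall l, 0 <= a + 2 * l * b + l * l * c) -> b * b <= a * c.
Proof.
move=> c0 H.
have a0 : 0 <= a by move: (H 0); lra.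
case: (Rle_lt_or_eq_dec _ _ c0) => [cp|c0'].
- move: (H (- b / c)) => h.
  have : 0 <= (a * c - b * b) / c.
    apply: Rle_trans h _; right; field; lra.
  move=> h2; have := Rmult_le_compat_r c _ _ (Rlt_le _ _ cp) h2.
  have -> : (a * c - b * b) / c * c = a * c - b * b by field; lra.
  lra.
- subst c. case: (Req_dec b 0) => [->|bn]; first lra.
  move: (H (- (a + 1) / (2 * b))) => h.
  have : a + 2 * (- (a + 1) / (2 * b)) * b + (- (a + 1) / (2 * b)) * (- (a + 1) / (2 * b)) * 0 = -1.
    field; auto.
  lra.
Qed.


Lemma inner_add_r d (X : pt d -> Prop) k H hadd hscal (inner : H -> H -> R) ev kfeat
  (Hr : IsRKHS X k hadd hscal inner ev kfeat) f g h :
  inner f (hadd g h) = inner f g + inner f h.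
Proof. by rewrite (rkhs_inner_sym Hr) (rkhs_inner_add Hr) !(rkhs_inner_sym Hr f). Qed.

Lemma inner_scal_r d (X : pt d -> Prop) k H hadd hscal (inner : H -> H -> R) ev kfeat
  (Hr : IsRKHS X k hadd hscal inner ev kfeat) a f g :
  inner f (hscal a g) = a * inner f g.
Proof. by rewrite (rkhs_inner_sym Hr) (rkhs_inner_scal Hr) (rkhs_inner_sym Hr f). Qed.

Lemma inner_cs d (X : pt d -> Prop) k H hadd hscal (inner : H -> H -> R) ev kfeat
  (Hr : IsRKHS X k hadd hscal inner ev kfeat) f g :
  Rabs (inner f g) <= sqrt (inner f f) * sqrt (inner g g).
Proof.
have f0 := rkhs_inner_pos Hr f; have g0 := rkhs_inner_pos Hr g.
have q : inner f g * inner f g <= inner f f * inner g g.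
  apply: quad_cs => // l.
  have := rkhs_inner_pos Hr (hadd f (hscal l g)).
  rewrite (rkhs_inner_add Hr) !(inner_add_r Hr) !(rkhs_inner_scal Hr) !(inner_scal_r Hr).
  rewrite (rkhs_inner_sym Hr g f); lra.
rewrite -sqrt_mult //.
rewrite -sqrt_Rsqr_abs; apply: sqrt_le_1_alt; rewrite /Rsqr; lra.
Qed.

Fixpoint hlin H (hadd : H -> H -> H) (hscal : R -> H -> H) (z : H) (c : nat -> R) (p : nat -> H) n : H :=
 match n with 0%N => z | n'.+1 => hadd (hlin hadd hscal z c p n') (hscal (c n') (p n')) end.

Lemma inner_hlin d (X : pt d -> Prop) k H hadd hscal (inner : H -> H -> R) ev kfeat
  (Hr : IsRKHS X k hadd hscal inner ev kfeat) z c p n h :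
  inner z h = 0 -> inner (hlin hadd hscal z c p n) h = (\sum_(0 <= i < n) c i * inner (p i) h)%R.
Proof.
move=> z0; elim: n => [|n IH] /=; first by rewrite big_geq.
by rewrite big_nat_recr //= (rkhs_inner_add Hr) IH (rkhs_inner_scal Hr).
Qed.

Definition Amat d (k : pt d -> pt d -> R) (sigma : R) xs t :=
  (Kmat k xs t + (sigma ^+ 2)%:M)%R.

Lemma k_sym d (X : pt d -> Prop) k H hadd hscal (inner : H -> H -> R) ev kfeat
  (Hr : IsRKHS X k hadd hscal inner ev kfeat) x y : X x -> X y -> k x y = k y x.
Proof.
move=> Xx Xy; rewrite -(rkhs_kfeat Hr Xx Xy) -(rkhs_reproducing Hr _ Xx).
by rewrite (rkhs_inner_sym Hr) (rkhs_reproducing Hr _ Xy) (rkhs_kfeat Hr Xy Xx).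
Qed.

Lemma inner_kk d (X : pt d -> Prop) k H hadd hscal (inner : H -> H -> R) ev kfeat
  (Hr : IsRKHS X k hadd hscal inner ev kfeat) x y : X x -> X y ->
  inner (kfeat x) (kfeat y) = k y x.
Proof. by move=> Xx Xy; rewrite (rkhs_reproducing Hr _ Xy) (rkhs_kfeat Hr Xy Xx). Qed.

Lemma sumsq_ge0 n (a : 'cV[R]_n) : 0 <= ((a^T *m a) 0 0)%R.
Proof.
rewrite mxE; apply: (big_ind (fun x => 0 <= x)) => [|x y|i _]; rewrite /=.
- by right.
- move=> *; change (0 <= x + y); lra.
- rewrite mxE; exact: Rle_0_sqr.
Qed.

Local Open Scope ring_scope.

Lemma gp_facts d (X : pt d -> Prop) k H hadd hscal (inner : H -> H -> R) ev kfeat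
  (Hr : IsRKHS X k hadd hscal inner ev kfeat) sigma (xs : nat -> pt d) t x :
  (forall i, (i < t)%N -> X (xs i.+1)) -> X x -> Amat k sigma xs t \in unitmx ->
  Rle 0 (post_var k sigma xs t x) /\ Rle (post_var k sigma xs t x) (k x x) /\
  forall f, Rle (Rabs (Rminus (ev f x) (post_mean k sigma (ev f) xs t x)))
               (Rmult (hnorm inner f) (sqrt (post_var k sigma xs t x))).
Proof.
move=> Xs Xx uA.
set A := Amat k sigma xs t.
set kv := kvec k xs t x.
set al := invmx A *m kv.
set z := hscal 0 (kfeat x).
have z0 : forall h, inner z h = 0.
  by move=> h; rewrite (rkhs_inner_scal Hr); toR; ring.
set c := fun i : nat => oapp (fun j : 'I_t => al j 0) 0 (insub i).
set G := hlin hadd hscal z c (fun i => kfeat (xs i.+1)) t.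
have innG : forall h, inner G h = \sum_(j < t) al j 0 * inner (kfeat (xs j.+1)) h.
  move=> h; rewrite (inner_hlin Hr) // big_mkord; apply: eq_bigr => j _.
  by rewrite /c valK.
have innG' : forall h, inner h G = \sum_(j < t) al j 0 * inner (kfeat (xs j.+1)) h.
  by move=> h; rewrite (rkhs_inner_sym Hr).
have Asym : A^T = A.
  rewrite /A /Amat linearD /= tr_scalar_mx; congr (_ + _).
  apply/matrixP => i j; rewrite !mxE; apply: (k_sym Hr); exact: Xs.
have alT : kv^T *m invmx A = al^T by rewrite trmx_mul trmx_inv Asym.
have Aal : A *m al = kv by rewrite /al mulmxA mulmxV // mul1mx.
have h1 : inner G (kfeat x) = (al^T *m kv) 0 0.
  rewrite innG mxE; apply: eq_bigr => j _; rewrite !mxE (inner_kk Hr) //; exact: Xs.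
have h2 : inner G G = (al^T *m Kmat k xs t *m al) 0 0.
  rewrite innG mxE.
  under eq_bigr => j _ do rewrite innG' mulr_sumr.
  under [RHS]eq_bigr => i _ do rewrite mxE mulr_suml.
  rewrite exchange_big /=; apply: eq_bigr => j _; apply: eq_bigr => i _.
  rewrite !mxE (inner_kk Hr); try exact: Xs. toR. ring.
have h3 : al^T *m A *m al = al^T *m Kmat k xs t *m al + sigma ^+ 2 *: (al^T *m al).
  by rewrite /A /Amat mulmxDr mulmxDl mul_mx_scalar scalemxAl.
have h4 : al^T *m A *m al = al^T *m kv by rewrite -mulmxA Aal.
have hP : (al^T *m kv) 0 0 = inner G G + sigma ^+ 2 * (al^T *m al) 0 0.
  by rewrite -h4 h3 h2 mxE [in X in _ + X]mxE.
have hN := sumsq_ge0 al.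
have hQ := rkhs_inner_pos Hr G.
have hV : post_var k sigma xs t x = k x x - (al^T *m kv) 0 0.
  by rewrite /post_var -/A -/kv alT.
set g := hadd (kfeat x) (hscal (-1) G).
have hg : inner g g = k x x - 2 * (al^T *m kv) 0 0 + inner G G.
  rewrite /g (rkhs_inner_add Hr) !(inner_add_r Hr) (rkhs_inner_scal Hr) !(inner_scal_r Hr).
  rewrite (rkhs_inner_scal Hr) (inner_kk Hr) // (rkhs_inner_sym Hr (kfeat x) G) h1.
  toR; ring.
have hgp := rkhs_inner_pos Hr g.
have hs2 : Rle 0 (sigma ^+ 2) by toR; apply: Rle_0_sqr.
have hsN : Rle 0 (sigma ^+ 2 * (al^T *m al) 0 0) by apply: Rmult_le_pos.
have hgV : Rle (inner g g) (post_var k sigma xs t x).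
  rewrite hV hg hP; move: hsN; toR; lra.
split; [|split].
- apply: Rle_trans hgV; exact: hgp.
- rewrite hV hP; move: hsN hQ; toR; lra.
move=> f.
have hM : post_mean k sigma (ev f) xs t x = inner f G.
  rewrite /post_mean -/A -/kv alT (rkhs_inner_sym Hr) innG mxE; apply: eq_bigr => j _.
  rewrite !mxE (rkhs_inner_sym Hr) (rkhs_reproducing Hr) //; exact: Xs.
have hfg : inner f g = Rminus (ev f x) (post_mean k sigma (ev f) xs t x).
  rewrite hM /g (inner_add_r Hr) (inner_scal_r Hr) (rkhs_reproducing Hr) //; toR; ring.
rewrite -hfg; apply: Rle_trans (inner_cs Hr f g) _.
apply: Rmult_le_compat_l; first exact: sqrt_pos.
exact: sqrt_le_1_alt.
Qed.

Lemma det_cast m m' (e : m = m') (A : 'M[R]_m) : \det (castmx (e,e) A) = \det A.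
Proof. by case: m' / e; rewrite castmx_id. Qed.


Lemma Amat_succ d (k : pt d -> pt d -> R) sigma xs t :
  (forall i j, (i <= t)%N -> (j <= t)%N -> k (xs i.+1) (xs j.+1) = k (xs j.+1) (xs i.+1)) ->
  Amat k sigma xs t.+1 = castmx (addn1 t, addn1 t)
    (block_mx (Amat k sigma xs t) (kvec k xs t (xs t.+1))
              (kvec k xs t (xs t.+1))^T (k (xs t.+1) (xs t.+1) + sigma ^+ 2)%:M).
Proof.
move=> ksym; apply/matrixP => i j; rewrite castmxE /=.
set i1 := cast_ord _ i; set j1 := cast_ord _ j.
have vi : val i1 = val i by []. have vj : val j1 = val j by [].
have -> : Amat k sigma xs t.+1 i j = k (xs i.+1) (xs j.+1) + sigma ^+ 2 *+ (i == j) by rewrite !mxE.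
case: (split_ordP i1) => i' Ei; case: (split_ordP j1) => j' Ej;
  rewrite Ei Ej ?block_mxEul ?block_mxEur ?block_mxEdl ?block_mxEdr;
  move: vi vj; rewrite Ei Ej /= => vi vj; rewrite /Amat /Kmat !mxE.
- rewrite -vi -vj; congr (_ + _); congr (_ *+ _).
  by rewrite -val_eqE -[i' == j']val_eqE /= vi vj.
- rewrite ord1 addn0 in vj.
  have -> : (i == j) = false by rewrite -val_eqE /= -vi -vj ltn_eqF.
  rewrite addr0 -vi -vj ksym //; exact: ltnW.
- rewrite ord1 addn0 in vi.
  have -> : (i == j) = false by rewrite -val_eqE /= -vi -vj gtn_eqF.
  by rewrite addr0 -vi -vj.
- rewrite ord1 addn0 in vi; rewrite ord1 addn0 in vj.
  have -> : (i == j) by rewrite -val_eqE /= -vi -vj.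
  by rewrite -vi -vj !ord1 eqxx.
Qed.

Lemma det_schur n (A : 'M[R]_n) (u : 'cV_n) (v : 'rV_n) (c : R) : A \in unitmx ->
  \det (block_mx A u v c%:M) = \det A * (c - (v *m invmx A *m u) 0 0).
Proof.
move=> uA.
have -> : block_mx A u v c%:M =
   block_mx 1%:M 0 (v *m invmx A) 1%:M *m block_mx A u 0 (c%:M - v *m invmx A *m u).
  rewrite mulmx_block !mul1mx !mul0mx !addr0 -mulmxA mulVmx // mulmx1.
  by rewrite addrC subrK.
rewrite det_mulmx det_lblock det_ublock !det1 !mul1r det_mx11 !mxE.
by rewrite eqxx mulr1n.
Qed.

Lemma det_rec d (X : pt d -> Prop) k H hadd hscal (inner : H -> H -> R) ev kfeat
  (Hr : IsRKHS X k hadd hscal inner ev kfeat) sigma (xs : nat -> pt d) T :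
  Rlt 0 sigma -> (forall i, (1 <= i <= T)%N -> X (xs i)) ->
  forall t, (t <= T)%N -> Amat k sigma xs t \in unitmx /\
    \det (Amat k sigma xs t) = \prod_(0 <= s < t) (sigma ^+ 2 + post_var k sigma xs s (xs s.+1)).
Proof.
move=> s0 XT; elim=> [|t IH] ht.
  by rewrite big_geq // det_mx00 unitmxE det_mx00 unitr1.
have [uA dA] := IH (ltnW ht).
have Xs : forall i, (i < t.+1)%N -> X (xs i.+1).
  move=> i hi; apply: XT; rewrite ltn0Sn /=; exact: leq_trans hi ht.
have [pv0 _] := gp_facts Hr (fun i hi => Xs i (ltnW hi)) (Xs t (ltnSn t)) uA.
have dE : \det (Amat k sigma xs t.+1) =
          \det (Amat k sigma xs t) * (sigma ^+ 2 + post_var k sigma xs t (xs t.+1)).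
  rewrite Amat_succ; last first.
    move=> i j hi hj; apply: (k_sym Hr); apply: Xs; by rewrite ltnS.
  rewrite det_cast det_schur // /post_var -/(Amat k sigma xs t).
  by congr (_ * _); rewrite addrA (addrC (k _ _)).
have pos : sigma ^+ 2 + post_var k sigma xs t (xs t.+1) != 0.
  apply/eqP; move: pv0; toR; nra.
split.
  rewrite unitmxE dE unitfE; apply: mulf_neq0 => //.
by rewrite dE dA big_nat_recr.
Qed.

Local Close Scope ring_scope.

Lemma main
  (d : nat) (X : pt d -> Prop) (k : pt d -> pt d -> R)
  (H : Type) (hadd : H -> H -> H) (hscal : R -> H -> H)
  (inner : H -> H -> R) (ev : H -> pt d -> R) (kfeat : pt d -> H)
  (sigma : R) (hf : H) (xs : nat -> pt d) (xstar : pt d) (T : nat) :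
  compact_set X ->
  IsRKHS X k hadd hscal inner ev kfeat ->
  (forall x y, X x -> X y -> k x y <= 1) ->
  0 < sigma ->
  X xstar -> (forall x, X x -> ev hf x <= ev hf xstar) ->
  (forall t, (le 1 t /\ le t T) ->
     X (xs t) /\
     forall x, X x ->
       post_mean k sigma (ev hf) xs (t - 1) x
         + hnorm inner hf * sqrt (post_var k sigma xs (t - 1) x)
       <= post_mean k sigma (ev hf) xs (t - 1) (xs t)
         + hnorm inner hf * sqrt (post_var k sigma xs (t - 1) (xs t))) ->
  (forall i j, (le 1 i /\ le i T) -> (le 1 j /\ le j T) -> i <> j -> xs i <> xs j) ->
  le 1 T ->
  forall gammaT : R,
  (forall zs : nat -> pt d, (forall t, (le 1 t /\ le t T) -> X (zs t)) ->
     info_gain k sigma zs T <= gammaT) ->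
  cum_regret (ev hf) xstar xs T
    <= hnorm inner hf * sqrt (INR T * C1_const sigma * gammaT)
       + 2 * INR T * hnorm inner hf * sigma
  /\
  simple_regret (ev hf) xstar xs T
    <= hnorm inner hf * sqrt (C1_const sigma * gammaT / INR T)
       + 2 * hnorm inner hf * sigma.
Proof.
move=> _ Hr k1 s0 Xst fmax Alg _ T1 gammaT hgam.
have XT : forall i, (1 <= i <= T)%N -> X (xs i).
  by move=> i /andP [h1 h2]; case: (Alg i (conj (elimT leP h1) (elimT leP h2))).
have Xs : forall s, (s < T)%N -> X (xs s.+1).
  by move=> s hs; apply: XT; rewrite ltn0Sn.
have Xlt : forall s i, (s < T)%N -> (i < s)%N -> X (xs i.+1).
  move=> s i hs hi; apply: Xs; exact: ltn_trans hi hs.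
have DR := det_rec Hr s0 XT.
set B := hnorm inner hf.
have B0 : 0 <= B by apply: sqrt_pos.
set v := fun s => post_var k sigma xs s (xs s.+1).
have gp : forall s, (s < T)%N ->
   0 <= v s /\ v s <= 1 /\ ev hf xstar - ev hf (xs s.+1) <= 2 * B * sqrt (v s).
  move=> s hs.
  have [uA _] := DR s (ltnW hs).
  have [v0 [vk hv]] := gp_facts Hr (fun i hi => Xlt s i hs hi) (Xs s hs) uA.
  have [_ [_ hstar]] := gp_facts Hr (fun i hi => Xlt s i hs hi) Xst uA.
  have [_ ucb] := Alg s.+1 (conj (elimT leP (ltn0Sn s)) (elimT leP hs)).
  have e : (s.+1 - 1)%N = s by rewrite subn1.
  rewrite e in ucb; move: (ucb xstar Xst) => u.
  have k1' := k1 _ _ (Xs s hs) (Xs s hs).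
  split; first exact: v0.
  split; first by apply: Rle_trans vk k1'.
  move: (hv hf) (hstar hf) => a1 a2.
  have := Rle_trans _ _ _ (Rle_abs _) a1.
  have := Rle_trans _ _ _ (Rle_abs _) a2.
  rewrite -Rabs_Ropp in a1; have := Rle_trans _ _ _ (Rle_abs _) a1.
  rewrite /v /B; move: u; rewrite /B.
  set m1 := post_mean _ _ _ _ _ xstar. set m2 := post_mean _ _ _ _ _ (xs s.+1).
  set q1 := hnorm inner hf * _. set q2 := hnorm inner hf * sqrt (post_var k sigma xs s (xs s.+1)).
  move=> *. 
  have -> : 2 * hnorm inner hf * sqrt (post_var k sigma xs s (xs s.+1)) = 2 * q2 by rewrite /q2; ring.
  lra.
set S := (\sum_(0 <= s < T) sqrt (v s))%R.
set V := (\sum_(0 <= s < T) v s)%R.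
have S0 : 0 <= S by apply: sum_ge0 => s _; exact: sqrt_pos.
have RS : cum_regret (ev hf) xstar xs T <= 2 * B * S.
  rewrite /cum_regret big_add1 /= /S -sum_scal; apply: sum_le => s hs.
  by case: (gp s hs) => _ [_ h].
have SV : S * S <= INR T * V.
  have := sum_cs T (fun s => sqrt (v s)).
  rewrite -/S; have -> : (\sum_(0 <= i < T) (sqrt (v i) * sqrt (v i)))%R = V.
    apply: eq_big_nat => s /andP [_ hs]; apply: sqrt_sqrt.
    by case: (gp s hs).
  by [].
set a := / (sigma * sigma).
have a0 : 0 < a by apply: Rinv_0_lt_compat; nra.
set L := ln (1 + a).
have L0 : 0 < L by rewrite /L -ln_1; apply: ln_increasing; lra.
have hprod : (\det (1%:M + sigma ^- 2 *: Kmat k xs T))%R =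
             (\prod_(0 <= s < T) (1 + a * v s))%R.
  have sn : (sigma ^+ 2 != 0)%R by apply/eqP; toR; nra.
  have -> : (1%:M + sigma ^- 2 *: Kmat k xs T = sigma ^- 2 *: Amat k sigma xs T)%R.
    by rewrite /Amat scalerDr scale_scalar_mx mulVf // addrC.
  rewrite detZ; case: (DR T (leqnn T)) => _ ->.
  have gen : forall n (c : R) (F : nat -> R), (c ^+ n * \prod_(0 <= i < n) F i)%R = (\prod_(0 <= i < n) (c * F i))%R.
    move=> n c F; elim: n => [|n IH]; first by rewrite !big_geq // expr0 mulr1.
    by rewrite !big_nat_recr //= exprSr -IH; toR; ring.
  rewrite gen; apply: eq_bigr => i _.
  rewrite /a /v; toR; field; lra.
have hIG : info_gain k sigma xs T = / 2 * (\sum_(0 <= s < T) ln (1 + a * v s))%R.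
  rewrite /info_gain hprod sum_ln //.
  move=> i hi; case: (gp i hi) => h0 _; toR; nra.
have hIG' : info_gain k sigma xs T <= gammaT.
  apply: hgam => t [h1 h2]; by case: (Alg t (conj h1 h2)).
have VL : V <= 2 * gammaT / L.
  apply: Rle_trans (_ : V <= / L * (\sum_(0 <= s < T) ln (1 + a * v s))%R) _.
    rewrite -sum_scal; apply: sum_le => s hs.
    case: (gp s hs) => h0 [h1 _].
    have := ln_concave a0 (conj h0 h1).
    move=> h; apply: (Rmult_le_reg_l L) => //.
    have -> : L * (/ L * ln (1 + a * v s)) = ln (1 + a * v s) by field; lra.
    move: h; rewrite -/L; toR; lra.
  have : (\sum_(0 <= s < T) ln (1 + a * v s))%R <= 2 * gammaT by lra.
  move=> h; have -> : 2 * gammaT / L = / L * (2 * gammaT) by field; lra.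
  apply: Rmult_le_compat_l => //; left; exact: Rinv_0_lt_compat.
have T0 : 0 < INR T by apply: lt_0_INR; lia.
have cum := final_arith B0 T0 L0 s0 S0 RS SV VL.
split; first exact: cum.
apply: (final_simple T0 _ cum).
rewrite /simple_regret.
set M := \big[Rmax/ev hf (xs 1%N)]_(1 <= t < T.+1) ev hf (xs t).
have hM : forall s, (s < T)%N -> ev hf (xs s.+1) <= M.
  move=> s hs; rewrite /M -add1n; apply: bigmax_ge; by rewrite !add1n !ltnS hs.
rewrite -(sum_const T) /cum_regret big_add1 /=; apply: sum_le => s hs.
move: (hM s hs); toR; lra.
Qed.

End CorHelpers.

Open Scope R_scope.

Theorem corollary5
  (d : nat) (X : pt d -> Prop) (k : pt d -> pt d -> R)
  (H : Type) (hadd : H -> H -> H) (hscal : R -> H -> H)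
  (inner : H -> H -> R) (ev : H -> pt d -> R) (kfeat : pt d -> H)
  (sigma : R) (hf : H) (xs : nat -> pt d) (xstar : pt d) (T : nat) :
  compact_set X ->
  IsRKHS X k hadd hscal inner ev kfeat ->
  (forall x y, X x -> X y -> k x y <= 1) ->
  0 < sigma ->
  (* x* is a maximizer of f over X *)
  X xstar -> (forall x, X x -> ev hf x <= ev hf xstar) ->
  (* Algorithm 3 with h = f, g = 0 (noise-free observations y_t = f(x_t)) *)
  (forall t, (1 <= t <= T)%nat ->
     X (xs t) /\
     forall x, X x ->
       post_mean k sigma (ev hf) xs (t - 1) x
         + hnorm inner hf * sqrt (post_var k sigma xs (t - 1) x)
       <= post_mean k sigma (ev hf) xs (t - 1) (xs t)
         + hnorm inner hf * sqrt (post_var k sigma xs (t - 1) (xs t))) ->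
  (* the query points are pairwise distinct *)
  (forall i j, (1 <= i <= T)%nat -> (1 <= j <= T)%nat -> i <> j -> xs i <> xs j) ->
  (1 <= T)%nat ->
  (* gammaT is gamma_T = max over x_1..x_T in X of (1/2) log det (I + sigma^-2 K_T);
     the bounds are stated for every upper bound gammaT of that quantity *)
  forall gammaT : R,
  (forall zs : nat -> pt d, (forall t, (1 <= t <= T)%nat -> X (zs t)) ->
     info_gain k sigma zs T <= gammaT) ->
  cum_regret (ev hf) xstar xs T
    <= hnorm inner hf * sqrt (INR T * C1_const sigma * gammaT)
       + 2 * INR T * hnorm inner hf * sigma
  /\
  simple_regret (ev hf) xstar xs T
    <= hnorm inner hf * sqrt (C1_const sigma * gammaT / INR T)
       + 2 * hnorm inner hf * sigma.
Proof.
  exact (@CorHelpers.main d X k H hadd hscal inner ev kfeat sigma hf xs xstar T).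
Qed.
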